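(* Let $n\ge2$ and $(x_1,\dots,x_n)\in\mathbb R^n$ with $-1<x_1\le x_2\le\dots\le x_n$ and $\sum_{i=1}^nx_i=0$. Then $$\prod_{i=1}^n(1+x_i)\le1-\frac{n}{2(n-1)}x_1^2\le1-\frac{\sum_{i=1}^nx_i^2}{2(n-1)^2}.$$ *)

(* Defs.v *)
From Stdlib Require Import Reals.
Open Scope R_scope.

(* Finite sum / product over indices 0 .. n-1 (a vector of R^n is encoded
   as x : nat -> R, with x i = x_{i+1} for i < n). *)
Fixpoint sumR (n : nat) (f : nat -> R) : R :=
  match n with O => 0 | S m => sumR m f + f m end.
Fixpoint prodR (n : nat) (f : nat -> R) : R :=
  match n with O => 1 | S m => prodR m f * f m end.

(* Main.v *)
Require Import Defs.
From Stdlib Require Import Reals Lra Lia Psatz.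
Open Scope R_scope.

Lemma sumR_shift n f : sumR (S n) f = f 0%nat + sumR n (fun i => f (S i)).
Proof. induction n. simpl; ring.
change (sumR (S (S n)) f) with (sumR (S n) f + f (S n)); rewrite IHn; simpl; ring. Qed.
Lemma prodR_shift n f : prodR (S n) f = f 0%nat * prodR n (fun i => f (S i)).
Proof. induction n. simpl; ring.
change (prodR (S (S n)) f) with (prodR (S n) f * f (S n)); rewrite IHn; simpl; ring. Qed.
Lemma sumR_ext n f g : (forall i, (i<n)%nat -> f i = g i) -> sumR n f = sumR n g.
Proof. induction n; intros H; simpl; auto. rewrite IHn by (intros; apply H; lia). rewrite H by lia. auto. Qed.
Lemma sumR_one n h : sumR n (fun i => 1 + h i) = INR n + sumR n h.
Proof. induction n; cbn [sumR]. simpl; ring. rewrite IHn, S_INR; ring. Qed.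
Lemma sumR_ge n f c : (forall i, (i<n)%nat -> c <= f i) -> INR n * c <= sumR n f.
Proof. induction n; intros H; cbn [sumR]. simpl; lra. rewrite S_INR.
assert (H1 := IHn (fun i Hi => H i ltac:(lia))). assert (H2 := H n ltac:(lia)). lra. Qed.
Lemma sumR_nonneg n f : (forall i, (i<n)%nat -> 0 <= f i) -> 0 <= sumR n f.
Proof. intros H. pose proof (sumR_ge n f 0 H). lra. Qed.
Lemma prodR_nonneg n f : (forall i, (i<n)%nat -> 0 <= f i) -> 0 <= prodR n f.
Proof. induction n; intros H; cbn [prodR]. lra.
apply Rmult_le_pos. apply IHn; intros; apply H; lia. apply H; lia. Qed.
Lemma sumR_sq_le n y : (forall i, (i<n)%nat -> 0 <= y i) ->
  sumR n (fun i => y i ^ 2) <= (sumR n y) ^ 2.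
Proof. induction n; intros H; cbn [sumR]. simpl; lra.
assert (H1 := IHn (fun i Hi => H i ltac:(lia))). assert (H2 := H n ltac:(lia)).
assert (H3 : 0 <= sumR n y) by (apply sumR_nonneg; intros; apply H; lia). nra. Qed.
Lemma sumR_sq_shift n g c : sumR n (fun i => (g i + c)^2) =
  sumR n (fun i => g i ^ 2) + 2 * c * sumR n g + INR n * c ^ 2.
Proof. induction n; cbn [sumR]. simpl; ring. rewrite IHn, S_INR; ring. Qed.
Lemma sumR_minus n g c : sumR n (fun i => g i - c) = sumR n g - INR n * c.
Proof. induction n; cbn [sumR]. simpl; ring. rewrite IHn, S_INR; ring. Qed.

Lemma Glem m (u : R) : 1 <= u ->
  INR m * u ^ (S m) - (INR m + 1) * u ^ m + 1 >= INR m * (INR m + 1) / 2 * (u - 1) ^ 2.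
Proof. intros Hu. induction m. simpl; lra.
assert (Hp : 1 <= u ^ m) by (apply pow_R1_Rle; lra).
assert (E : INR (S m) * u ^ S (S m) - (INR (S m) + 1) * u ^ S m + 1 =
  (INR m * u ^ (S m) - (INR m + 1) * u ^ m + 1) + (INR m + 1) * u^m * (u-1)^2)
  by (rewrite S_INR; simpl; ring).
rewrite E, S_INR.
assert (0 <= (INR m + 1) * (u ^ m - 1) * (u - 1) ^ 2).
{ apply Rmult_le_pos; [apply Rmult_le_pos|]. pose proof (pos_INR m); lra. lra. nra. }
nra. Qed.

Lemma flem j A B : 0 <= A -> 0 <= B -> A ^ j * ((INR j + 1) * B - INR j * A) <= B ^ (S j).
Proof. intros HA HB. induction j. simpl; lra.
assert (E : B ^ S (S j) - A ^ S j * ((INR (S j) + 1) * B - INR (S j) * A) =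
  B * (B ^ S j - A ^ j * ((INR j + 1) * B - INR j * A)) + (INR j + 1) * A^j * (B-A)^2)
  by (rewrite S_INR; simpl; ring).
assert (0 <= (INR j + 1) * A^j * (B-A)^2).
{ apply Rmult_le_pos; [apply Rmult_le_pos|]. pose proof (pos_INR j); lra. apply pow_le; lra. apply pow2_ge_0. }
assert (0 <= B * (B ^ S j - A ^ j * ((INR j + 1) * B - INR j * A))) by (apply Rmult_le_pos; lra).
lra. Qed.

Lemma amgm k y : (forall i, (i < S k)%nat -> 0 <= y i) ->
  prodR (S k) y <= (sumR (S k) y / INR (S k)) ^ (S k).
Proof. induction k; intros H.
- simpl. replace (0 + y 0%nat) with (y 0%nat) by ring. unfold Rdiv. rewrite Rinv_1. lra.
- assert (IH := IHk (fun i Hi => H i ltac:(lia))).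
  assert (Hz := H (S k) ltac:(lia)).
  change (prodR (S (S k)) y) with (prodR (S k) y * y (S k)).
  change (sumR (S (S k)) y) with (sumR (S k) y + y (S k)).
  set (Sm := sumR (S k) y) in *. set (z := y (S k)) in *.
  assert (HS : 0 <= Sm) by (apply sumR_nonneg; intros; apply H; lia).
  assert (HK : 0 < INR (S k)) by (apply lt_0_INR; lia).
  set (K := INR (S k)) in *.
  assert (HA : 0 <= Sm / K) by (unfold Rdiv; apply Rmult_le_pos; [lra | apply Rlt_le, Rinv_0_lt_compat; lra]).
  assert (HB : 0 <= (Sm + z) / (K + 1)) by (unfold Rdiv; apply Rmult_le_pos; [lra | apply Rlt_le, Rinv_0_lt_compat; lra]).
  pose proof (flem (S k) _ _ HA HB) as F. fold K in F.
  replace ((K + 1) * ((Sm + z) / (K + 1)) - K * (Sm / K)) with z in F by (field; lra).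
  rewrite (S_INR (S k)). fold K.
  apply Rle_trans with ((Sm / K) ^ S k * z); [apply Rmult_le_compat_r; lra | exact F].
Qed.

Theorem lemmaA2 (n : nat) (x : nat -> R) :
  (2 <= n)%nat ->
  -1 < x 0%nat ->
  (forall i : nat, (S i < n)%nat -> x i <= x (S i)) ->
  sumR n x = 0 ->
  prodR n (fun i => 1 + x i) <= 1 - INR n / (2 * (INR n - 1)) * (x 0%nat) ^ 2
  /\ 1 - INR n / (2 * (INR n - 1)) * (x 0%nat) ^ 2
     <= 1 - sumR n (fun i => (x i) ^ 2) / (2 * (INR n - 1) ^ 2).
Proof.
  intros Hn Ha Hmono Hsum.
  set (a := x 0%nat) in *.
  assert (Hge : forall i, (i < n)%nat -> a <= x i).
  { induction i; intros Hi. unfold a; lra. specialize (Hmono i Hi). specialize (IHi ltac:(lia)). lra. }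
  assert (HN : 2 <= INR n) by (apply (le_INR 2) in Hn; simpl in Hn; lra).
  assert (Hale : a <= 0) by (pose proof (sumR_ge n x a Hge); nra).
  split.
  - destruct n as [|m]; [lia|].
    rewrite prodR_shift. rewrite sumR_shift in Hsum. fold a in Hsum |- *.
    rewrite S_INR in HN |- *.
    assert (HM : 1 <= INR m) by lra.
    set (M := INR m) in *.
    destruct m as [|k]; [lia|].
    pose proof (amgm k (fun i => 1 + x (S i))) as AG.
    assert (Hy : forall i, (i < S k)%nat -> 0 <= 1 + x (S i)).
    { intros i Hi. pose proof (Hge (S i) ltac:(lia)). lra. }
    specialize (AG Hy). rewrite sumR_one in AG. fold M in AG.
    replace (M + sumR (S k) (fun i => x (S i))) with (M - a) in AG by lra.
    set (u := (M - a) / M) in *.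
    assert (Hu : 1 <= u). { unfold u. apply Rmult_le_reg_r with M; [lra|]. field_simplify; lra. }
    assert (Hau : a = M - M * u) by (unfold u; field; lra).
    pose proof (Glem (S k) u Hu) as G. fold M in G.
    set (U := u ^ S k) in *.
    replace (u ^ S (S k)) with (u * U) in G by (unfold U; simpl; ring).
    apply Rle_trans with ((1 + a) * U).
    { apply Rmult_le_compat_l; lra. }
    replace ((M + 1) / (2 * (M + 1 - 1)) * a ^ 2) with (M * (M + 1) / 2 * (u - 1) ^ 2)
      by (rewrite Hau; field; lra).
    rewrite Hau. nra.
  - set (y := fun i => x i - a).
    assert (Hy : forall i, (i < n)%nat -> 0 <= y i) by (intros i Hi; unfold y; pose proof (Hge i Hi); lra).
    assert (Sy : sumR n y = - INR n * a) by (unfold y; rewrite sumR_minus; lra).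
    pose proof (sumR_sq_le n y Hy) as Q.
    pose proof (sumR_sq_shift n y a) as E.
    assert (Ex : sumR n (fun i => (y i + a) ^ 2) = sumR n (fun i => x i ^ 2))
      by (apply sumR_ext; intros; unfold y; f_equal; ring).
    rewrite Ex, Sy in E. rewrite Sy in Q.
    assert (Hb : sumR n (fun i => x i ^ 2) <= INR n * (INR n - 1) * a ^ 2) by nra.
    set (N := INR n) in *. set (Q2 := sumR n (fun i => x i ^ 2)) in *.
    replace (N / (2 * (N - 1)) * a ^ 2) with (N * (N - 1) * a ^ 2 / (2 * (N - 1) ^ 2)) by (field; lra).
    assert (0 < 2 * (N - 1) ^ 2) by nra.
    unfold Rdiv. apply Rplus_le_compat_l, Ropp_le_contravar.
    apply Rmult_le_compat_r; [apply Rlt_le, Rinv_0_lt_compat; lra | lra].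
Qed.
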